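(* Let $A,B\in \mathbb{R}^{m\times n}$ with $m<n$ and $b\in \mathbb{R}^m$. If the equation $Ax-B|x|=b$ has a solution with more than $m$ nonzero entries, then it has infinitely many solutions with the same sign pattern as that known solution.
   Context: $|x|$ is the entrywise absolute value. Two vectors have the same sign pattern if their entrywise signs (in $\{-1,0,1\}$) agree. *)

(* Defs.v *)
From mathcomp Require Import all_boot all_order all_algebra.
Set Implicit Arguments. Unset Strict Implicit. Unset Printing Implicit Defensive.
Import Order.TTheory GRing.Theory Num.Theory.
Local Open Scope ring_scope.

Definition mabs (R : numDomainType) (m n : nat) (x : 'M[R]_(m, n)) : 'M[R]_(m, n) :=
  \matrix_(i, j) `|x i j|.

Definition nnz (R : numDomainType) (n : nat) (x : 'cV[R]_n) : nat :=
  #|[set i : 'I_n | x i 0 != 0]|.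

Definition same_sign (R : numDomainType) (n : nat) (x y : 'cV[R]_n) : Prop :=
  forall i : 'I_n, Num.sg (x i 0) = Num.sg (y i 0).

Definition ave_sol (R : numDomainType) (m n : nat)
  (A B : 'M[R]_(m, n)) (b : 'cV[R]_m) (x : 'cV[R]_n) : Prop :=
  A *m x - B *m mabs x = b.

(* a predicate has infinitely many elements: it is not contained in any finite list *)
Definition infinitely_many (T : eqType) (P : T -> Prop) : Prop :=
  forall s : seq T, exists x, P x /\ x \notin s.

(* Main.v *)
Require Import Defs.
From mathcomp Require Import all_boot all_order all_algebra.
From mathcomp Require Import reals.
From mathcomp Require Import lra zify.
Import Order.TTheory GRing.Theory Num.Theory.
Local Open Scope ring_scope.

Lemma sg_pert (R : realFieldType) (x y : R) : `|y| < `|x| -> Num.sg (x + y) = Num.sg x.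
Proof.
have [xn|xp|->] := ltrgtP x 0; move=> /ltr_normlP [h1 h2].
- rewrite ltr0_norm // in h1 h2. rewrite !ltr0_sg //; lra.
- rewrite gtr0_norm // in h1 h2. rewrite !gtr0_sg //; lra.
- rewrite normr0 in h1 h2; lra.
Qed.

Lemma common_delta (R : realFieldType) (T : finType) (P : T -> R -> Prop) :
  (forall j, exists2 d, 0 < d & forall e, 0 < e -> e <= d -> P j e) ->
  exists2 d, 0 < d & forall j e, 0 < e -> e <= d -> P j e.
Proof.
move=> H.
suff [d d0 Hd] : exists2 d, 0 < d & forall j, j \in enum T -> forall e, 0 < e -> e <= d -> P j e.
  by exists d => // j e; apply: Hd; rewrite mem_enum.
elim: (enum T) => [|a s [d d0 Hd]]; first by exists 1.
have [da da0 Hda] := H a.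
exists (Num.min d da); first by rewrite lt_min d0 da0.
move=> j; rewrite inE => /orP [/eqP -> | js] e e0; rewrite le_min => /andP [h1 h2].
  exact: Hda.
exact: Hd.
Qed.

Lemma uniq_notin (T : eqType) (s t : seq T) : uniq t -> (size s < size t)%N ->
  exists2 x, x \in t & x \notin s.
Proof.
move=> ut lt.
case: (boolP (all (fun x => x \in s) t)) => [/allP sub | /allPn [x xt xs]].
  by have := uniq_leq_size ut sub; rewrite leqNgt lt.
by exists x.
Qed.

Theorem corollary3p2 (R : realType) (m n : nat) (A B : 'M[R]_(m, n))
  (b : 'cV[R]_m) (x0 : 'cV[R]_n) :
  (m < n)%N ->
  ave_sol A B b x0 ->
  (m < nnz x0)%N ->
  infinitely_many (fun x : 'cV[R]_n => ave_sol A B b x /\ same_sign x x0).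
Proof.
move=> _ hx0 hnnz.
set B' : 'M[R]_(m, n) := \matrix_(i, j) (B i j * Num.sg (x0 j 0)).
set C := A - B'.
have key : forall x, same_sign x x0 -> C *m x = b -> ave_sol A B b x.
  move=> x sx <-; rewrite /ave_sol /C mulmxBl; congr (_ - _).
  apply/matrixP => i j; rewrite !mxE; apply: eq_bigr => l _.
  by rewrite !mxE (ord1 j) normrEsg sx mulrA.
have Cx0 : C *m x0 = b.
  rewrite -hx0 /C mulmxBl; congr (_ - _).
  apply/matrixP => i j; rewrite !mxE; apply: eq_bigr => l _.
  by rewrite !mxE (ord1 j) normrEsg mulrA.
set S := [set i : 'I_n | x0 i 0 != 0].
have hk : (m < #|S|)%N by [].
set E : 'M[R]_(n, #|S|) := \matrix_(j, i) ((j == enum_val i)%:R).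
have [v [v0 Cv vS]] : exists v : 'cV[R]_n, [/\ v != 0, C *m v = 0 & forall j, j \notin S -> v j 0 = 0].
  set X := (C *m E)^T.
  have : kermx X != 0.
    apply/eqP => h; have := mxrank_ker X; rewrite h mxrank0.
    have := rank_leq_col X; lia.
  move=> /rowV0Pn [u /sub_kermxP uX u0].
  exists (E *m u^T); split.
  - apply: contra u0 => /eqP h; apply/eqP/matrixP => a i; rewrite (ord1 a) mxE.
    move/matrixP: h => /(_ (enum_val i) 0); rewrite !mxE (bigD1 i) //= big1 ?addr0.
    + by rewrite !mxE eqxx mul1r.
    + move=> l li; rewrite !mxE; case: eqP => [/enum_val_inj il|]; last by rewrite mul0r.
      by rewrite il eqxx in li.
  - by rewrite mulmxA -(trmxK (C *m E)) -trmx_mul uX trmx0.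
  - move=> j jS; rewrite !mxE big1 // => i _; rewrite !mxE.
    case: eqP => [ji|]; last by rewrite mul0r.
    by move: jS; rewrite ji enum_valP.
have [d d0 Hd] : exists2 d : R, 0 < d & forall j e, 0 < e -> e <= d ->
    Num.sg ((x0 + e *: v) j 0) = Num.sg (x0 j 0).
  apply: common_delta => j.
  case: (boolP (j \in S)) => jS; last first.
    exists 1 => // e _ _; rewrite !mxE (vS j jS) mulr0 addr0 //.
  have xj : x0 j 0 != 0 by move: jS; rewrite inE.
  set a := `|v j 0|; set c := `|x0 j 0|.
  have a0 : 0 <= a by rewrite normr_ge0.
  have c0 : 0 < c by rewrite normr_gt0.
  have a1p : 0 < a + 1 by lra.
  have a1 : a + 1 != 0 by rewrite gt_eqF.
  exists (c / (a + 1)); first by rewrite divr_gt0.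
  move=> e e0 ed; rewrite !mxE; apply: sg_pert.
  have hd : c / (a + 1) * (a + 1) = c by rewrite divfK.
  rewrite normrM gtr0_norm // -/a -/c.
  move: hd ed; set d' := c / (a + 1) => hd ed; nra.
move=> s.
pose f (N : nat) : 'cV[R]_n := x0 + (d / N.+1%:R) *: v.
have finj : injective f.
  move=> N M /addrI /eqP; rewrite -subr_eq0 -scalerBl scaler_eq0 (negbTE v0) orbF subr_eq0.
  move=> /eqP /(mulfI (lt0r_neq0 d0)) /invr_inj /eqP; rewrite eqr_nat => /eqP; by case.
have ut : uniq (map f (iota 0 (size s).+1)) by rewrite map_inj_uniq // iota_uniq.
have st : (size s < size (map f (iota 0 (size s).+1)))%N by rewrite size_map size_iota.
have [x xt xs] := @uniq_notin _ s _ ut st.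
move/mapP: xt => [N _ xe]; subst x; exists (f N); split => //.
have e0 : 0 < d / N.+1%:R by rewrite divr_gt0 // ltr0Sn.
have ed : d / N.+1%:R <= d.
  rewrite ler_pdivrMr ?ltr0Sn // ler_peMr ?(ltW d0) // ler1n //.
have sx : same_sign (f N) x0 by move=> j; exact: (Hd j _ e0 ed).
split => //; apply: key => //.
by rewrite /f mulmxDr -scalemxAr Cv scaler0 addr0.
Qed.
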